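(* Let $\mathcal{H}_1,\dots,\mathcal{H}_J$ be real or complex Hilbert spaces and $\Sigma_j\subset\mathcal{H}_j$ cones. Let $\mathcal{H}=\mathcal{H}_1\times\dots\times\mathcal{H}_J$ with inner product $\langle(x_j)_j,(y_j)_j\rangle=\sum_j\langle x_j,y_j\rangle_{\mathcal{H}_j}$ and $\Sigma=\Sigma_1\times\dots\times\Sigma_J$. Then for all $(x_1,\dots,x_J)\in\mathcal{H}$, $$\|(x_1,\dots,x_J)\|_\Sigma^2=\sum_{j=1}^J\|x_j\|_{\Sigma_j}^2.$$
   Context: A cone is a set closed under multiplication by nonnegative scalars. For a cone $C$ in a Hilbert space with unit sphere $S(1)$, $\|x\|_C=\inf\{t\ge0:x\in t\cdot\overline{\mathrm{conv}}(C\cap S(1))\}$, with value $+\infty$ if no such $t$ exists (and the usual convention $(+\infty)^2=+\infty$, sums involving $+\infty$ equal $+\infty$). *)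

(* Defs.v *)
From HB Require Import structures.
From mathcomp Require Import all_boot all_order all_algebra.
From mathcomp Require Import all_classical all_reals ereal.
From mathcomp Require Import complex.
Set Implicit Arguments. Unset Strict Implicit. Unset Printing Implicit Defensive.
Import Order.TTheory GRing.Theory Num.Theory.
Local Open Scope ring_scope.
Local Open Scope classical_set_scope.

(* Hilbert spaces over a scalar field K that is either R or C = R[i].        *)
(* The scalar field is described by: conj (conjugation), re (real part) and  *)
(* ofR (embedding of the reals).  Real case: K = R, conj = re = ofR = id.    *)
(* Complex case: K = R[i], conj = conjc, re = Re, ofR = x |-> x%:C.          *)
Section HilbertDef.
Variables (R : realType) (K : fieldType) (conj : K -> K) (re : K -> R).

Record hilbert_axioms (V : lmodType K) (inner : V -> V -> K) : Prop := {
  inner_addl : forall x y z, inner (x + y) z = inner x z + inner y z;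
  inner_scalel : forall (a : K) x y, inner (a *: x) y = a * inner x y;
  inner_conj : forall x y, inner y x = conj (inner x y);
  inner_ge0 : forall x, 0 <= re (inner x x);
  inner_eq0 : forall x, re (inner x x) = 0 -> x = 0;
  inner_complete : forall u : nat -> V,
    (forall e : R, 0 < e -> exists N : nat, forall m n : nat,
        (N <= m)%N -> (N <= n)%N ->
        Num.sqrt (re (inner (u m - u n) (u m - u n))) < e) ->
    exists l : V, forall e : R, 0 < e -> exists N : nat, forall n : nat,
        (N <= n)%N -> Num.sqrt (re (inner (u n - l) (u n - l))) < e }.

Structure hilbertSpace := HilbertSpace {
  hcarrier :> lmodType K;
  hinner : hcarrier -> hcarrier -> K;
  hilbertP : hilbert_axioms hinner }.

End HilbertDef.

Section Gauge.
Variables (R : realType) (V : Type) (add : V -> V -> V) (zero : V)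
  (opp : V -> V) (scale : R -> V -> V) (norm : V -> R).

Definition is_cone (C : set V) : Prop :=
  forall (t : R) (x : V), 0 <= t -> C x -> C (scale t x).

Definition unit_sphere : set V := [set x | norm x = 1].

Definition conv_hull (A : set V) : set V :=
  [set x | exists (n : nat) (w : 'I_n -> R) (a : 'I_n -> V),
     [/\ (forall i, 0 <= w i), \sum_(i < n) w i = 1, (forall i, A (a i)) &
         x = \big[add/zero]_(i < n) scale (w i) (a i)]].

Definition norm_closure (A : set V) : set V :=
  [set x | forall e : R, 0 < e -> exists2 a, A a & norm (add x (opp a)) < e].

Definition dilate (t : R) (A : set V) : set V := [set scale t a | a in A].

Definition cone_gauge (C : set V) (x : V) : \bar R :=
  ereal_inf [set (t%:E)%E | t in
    [set t : R | 0 <= t /\ dilate t (norm_closure (conv_hull (C `&` unit_sphere))) x]].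

End Gauge.

Section HilbertGauge.
Variables (R : realType) (K : fieldType) (conj : K -> K) (re : K -> R)
  (ofR : R -> K).

Definition hnorm (H : hilbertSpace conj re) (x : H) : R :=
  Num.sqrt (re (hinner x x)).

Definition hcone (H : hilbertSpace conj re) (C : set H) : Prop :=
  is_cone (fun (t : R) (v : H) => ofR t *: v) C.

Definition hgauge (H : hilbertSpace conj re) (C : set H) (x : H) : \bar R :=
  cone_gauge +%R 0 -%R (fun (t : R) (v : H) => ofR t *: v) (@hnorm H) C x.

Variables (J : nat) (H : 'I_J -> hilbertSpace conj re).

Definition prod_add (x y : forall j, H j) : forall j, H j := fun j => x j + y j.
Definition prod_zero : forall j, H j := fun j => 0.
Definition prod_opp (x : forall j, H j) : forall j, H j := fun j => - x j.
Definition prod_scale (t : R) (x : forall j, H j) : forall j, H j :=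
  fun j => ofR t *: x j.
Definition prod_inner (x y : forall j, H j) : K :=
  \sum_(j < J) hinner (x j) (y j).
Definition prod_norm (x : forall j, H j) : R := Num.sqrt (re (prod_inner x x)).

Definition prod_set (Sigma : forall j, set (H j)) : set (forall j, H j) :=
  [set x | forall j, Sigma j (x j)].

Definition prod_gauge (C : set (forall j, H j)) (x : forall j, H j) : \bar R :=
  cone_gauge prod_add prod_zero prod_opp prod_scale prod_norm C x.

End HilbertGauge.

(* Main.v *)
Require Import Defs.
From HB Require Import structures.
From mathcomp Require Import all_boot all_order all_algebra.
From mathcomp Require Import all_classical all_reals ereal.
From mathcomp Require Import complex.
From mathcomp Require Import lra ring.
From mathcomp Require Import topology normedtype.
Import Order.TTheory GRing.Theory Num.Theory.
Import numFieldNormedType.Exports.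
Local Open Scope ring_scope.
Local Open Scope classical_set_scope.

Section Gen.
Variables (R : realType) (K : fieldType) (conj : K -> K) (re : K -> R)
  (ofR : R -> K).
Hypotheses (conjD : {morph conj : a b / a + b})
  (conjM : {morph conj : a b / a * b})
  (conjR : forall t, conj (ofR t) = ofR t)
  (reD : {morph re : a b / a + b})
  (reM : forall t a, re (ofR t * a) = t * re a)
  (reC : forall a, re (conj a) = re a)
  (ofRD : {morph ofR : a b / a + b})
  (ofRM : {morph ofR : a b / a * b})
  (ofR1 : ofR 1 = 1).

Lemma ofR0 : ofR 0 = 0.
Proof. by apply/(@addrI _ (ofR 0)); rewrite -ofRD !addr0. Qed.
Lemma re0 : re 0 = 0.
Proof. by apply/(@addrI _ (re 0)); rewrite -reD !addr0. Qed.
Lemma ofRN t : ofR (- t) = - ofR t.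
Proof. by apply/(@addrI _ (ofR t)); rewrite -ofRD !subrr ofR0. Qed.
Lemma reN a : re (- a) = - re a.
Proof. by apply/(@addrI _ (re a)); rewrite -reD !subrr re0. Qed.
Lemma scaleRA t s (V : lmodType K) (v : V) :
  ofR t *: (ofR s *: v) = ofR (t * s) *: v.
Proof. by rewrite scalerA ofRM. Qed.

Section HS.
Context {V : hilbertSpace conj re}.
Local Notation ip := (@hinner R K conj re V).
Local Notation HP := (hilbertP V).

Lemma ip0l y : ip 0 y = 0.
Proof. by rewrite -(scale0r (0 : V)) (inner_scalel HP) mul0r. Qed.
Lemma ipDr x y z : ip x (y + z) = ip x y + ip x z.
Proof. by rewrite (inner_conj HP) (inner_addl HP) conjD -!(inner_conj HP). Qed.
Lemma ipZr t x y : ip x (ofR t *: y) = ofR t * ip x y.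
Proof. by rewrite (inner_conj HP) (inner_scalel HP) conjM conjR -(inner_conj HP). Qed.
Lemma ip0r x : ip x 0 = 0.
Proof. by rewrite (inner_conj HP) ip0l -ofR0 conjR. Qed.
Lemma ipZl t x y : ip (ofR t *: x) y = ofR t * ip x y.
Proof. exact: (inner_scalel HP). Qed.
Lemma ipNl x y : ip (- x) y = - ip x y.
Proof. by rewrite -scaleN1r (inner_scalel HP) mulN1r. Qed.
Lemma ipNr x y : ip x (- y) = - ip x y.
Proof. by rewrite -scaleN1r -ofR1 -ofRN ipZr ofRN ofR1 mulN1r. Qed.
Lemma re_sym x y : re (ip x y) = re (ip y x).
Proof. by rewrite (inner_conj HP) reC. Qed.

Definition n2 (x : V) := re (ip x x).
Lemma n2_ge0 x : 0 <= n2 x. Proof. exact: (inner_ge0 HP). Qed.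
Lemma n2D x y : n2 (x + y) = n2 x + 2 * re (ip x y) + n2 y.
Proof.
rewrite /n2 (inner_addl HP) !ipDr !reD (re_sym y x); lra.
Qed.
Lemma n2Z t x : n2 (ofR t *: x) = t ^+ 2 * n2 x.
Proof. by rewrite /n2 ipZl ipZr mulrA -ofRM reM expr2. Qed.
Lemma n2N x : n2 (- x) = n2 x.
Proof. by rewrite /n2 ipNl ipNr opprK. Qed.

Lemma CS x y : re (ip x y) ^+ 2 <= n2 x * n2 y.
Proof.
have q l : 0 <= n2 x + 2 * l * re (ip x y) + l ^+ 2 * n2 y.
  have := n2_ge0 (x + ofR l *: y); rewrite n2D n2Z ipZr reM; lra.
have [y0|yn0] := eqVneq (n2 y) 0.
  have -> : y = 0 by apply: (inner_eq0 HP).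
  by rewrite ip0r re0 expr0n /=; apply: mulr_ge0; exact: n2_ge0.
have c0 : 0 < n2 y by rewrite lt_def yn0 n2_ge0.
set b := re (ip x y) in q *.
have := q (- b / n2 y).
have e : (- b / n2 y) * n2 y = - b by rewrite mulrVK // unitfE.
move: (- b / n2 y) e => l e h.
have : 0 <= n2 y * (n2 x + 2 * l * b + l ^+ 2 * n2 y) by apply: mulr_ge0 => //; lra.
nra.
Qed.

Definition nm (x : V) := Num.sqrt (n2 x).
Lemma nmE x : hnorm x = nm x. Proof. by []. Qed.
Lemma nm_ge0 x : 0 <= nm x. Proof. exact: sqrtr_ge0. Qed.
Lemma nm2 x : nm x ^+ 2 = n2 x. Proof. by rewrite sqr_sqrtr // n2_ge0. Qed.
Lemma nmZ t x : nm (ofR t *: x) = `|t| * nm x.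
Proof. by rewrite /nm n2Z sqrtrM ?sqrtr_sqr // sqr_ge0. Qed.
Lemma nmN x : nm (- x) = nm x. Proof. by rewrite /nm n2N. Qed.
Lemma nmB x y : nm (x - y) = nm (y - x). Proof. by rewrite -nmN opprB. Qed.
Lemma nm0 : nm 0 = 0. Proof. by rewrite /nm /n2 ip0l re0 sqrtr0. Qed.
Lemma nm_eq0 x : nm x = 0 -> x = 0.
Proof.
move=> h; apply: (inner_eq0 HP); apply/eqP; rewrite eq_le (inner_ge0 HP) andbT.
by rewrite -sqrtr_eq0; apply/eqP.
Qed.
Lemma nmD x y : nm (x + y) <= nm x + nm y.
Proof.
have hb : re (ip x y) <= nm x * nm y.
  have : re (ip x y) ^+ 2 <= (nm x * nm y) ^+ 2 by rewrite exprMn !nm2 CS.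
  move=> h; have := nm_ge0 x; have := nm_ge0 y.
  case: (lerP (re (ip x y)) 0) => hr a b0; first by apply: le_trans hr _; exact: mulr_ge0.
  by rewrite -(ler_pXn2r (n:=2)) // ?nnegrE ?mulr_ge0 // ltW.
rewrite -(ler_pXn2r (n:=2)) ?nnegrE ?addr_ge0 ?nm_ge0 //.
rewrite nm2 n2D sqrrD !nm2; lra.
Qed.

Lemma nm_sum n (w : 'I_n -> R) (a : 'I_n -> V) : (forall i, 0 <= w i) ->
  nm (\sum_(i < n) ofR (w i) *: a i) <= \sum_(i < n) w i * nm (a i).
Proof.
move=> w0; elim/big_rec2: _ => [|i y1 y2 _ h]; first by rewrite nm0.
apply: le_trans (nmD _ _) _; rewrite nmZ ger0_norm //; exact: lerD.
Qed.
End HS.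

Lemma jensen n (w m : 'I_n -> R) : (forall i, 0 <= w i) -> \sum_i w i = 1 ->
  (\sum_i w i * m i) ^+ 2 <= \sum_i w i * m i ^+ 2.
Proof.
move=> w0 w1; set M := \sum_i w i * m i.
have E : \sum_i w i * (m i - M) ^+ 2 =
   \sum_i w i * m i ^+ 2 - 2 * M * M + M ^+ 2 * \sum_i w i.
  rewrite (eq_bigr (fun i => w i * m i ^+ 2 - (2 * M) * (w i * m i) + M ^+ 2 * w i)); last by move=> i _; ring.
  by rewrite big_split sumrB /= -!mulr_sumr.
have : 0 <= \sum_i w i * (m i - M) ^+ 2.
  by apply: sumr_ge0 => i _; apply: mulr_ge0 => //; exact: sqr_ge0.
rewrite E w1; nra.
Qed.

Lemma arch (e : R) : 0 < e -> exists N : nat, forall n, (N <= n)%N -> (n.+1%:R)^-1 < e.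
Proof.
move=> e0; exists (Num.trunc e^-1) => n hn.
have h1 := truncnS_gt e^-1.
have h2 : (Num.trunc e^-1).+1%:R <= n.+1%:R :> R by rewrite ler_nat.
rewrite -[e]invrK ltf_pV2 ?posrE ?invr_gt0 //; first by apply: lt_le_trans h1 h2.
Qed.

Section Prod.
Variables (J : nat) (H : 'I_J -> hilbertSpace conj re)
  (Sigma : forall j, set (H j)).
Hypotheses (Scone : forall j : 'I_J, hcone ofR (Sigma j))
  (Sne : forall j : 'I_J, exists2 s, Sigma j s & s <> 0).

Definition Aj j : set (H j) := Sigma j `&` unit_sphere (@hnorm _ _ _ _ (H j)).
Definition convj j := conv_hull +%R 0 (fun t (v : H j) => ofR t *: v) (Aj j).
Definition clj j := norm_closure +%R -%R (@hnorm _ _ _ _ (H j)) (convj j).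
Definition Sj j (v : H j) t := 0 <= t /\ dilate (fun t (v : H j) => ofR t *: v) t (clj j) v.

Lemma hgaugeE j v : hgauge ofR (Sigma j) v = ereal_inf [set t%:E | t in Sj j v].
Proof. by []. Qed.

Definition PT := forall j, H j.
Definition PA : set PT := prod_set Sigma `&` unit_sphere (@prod_norm _ _ _ _ _ H).
Definition pconv := conv_hull (@prod_add _ _ _ _ _ H) (@prod_zero _ _ _ _ _ H)
   (@prod_scale _ _ _ _ ofR _ H) PA.
Definition pcl := norm_closure (@prod_add _ _ _ _ _ H) (@prod_opp _ _ _ _ _ H)
   (@prod_norm _ _ _ _ _ H) pconv.
Definition PS (x : PT) t := 0 <= t /\ dilate (@prod_scale _ _ _ _ ofR _ H) t pcl x.

Lemma prod_gaugeE x : prod_gauge ofR (prod_set Sigma) x = ereal_inf [set t%:E | t in PS x].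
Proof. by []. Qed.

Lemma prod_eval n (F : 'I_n -> PT) j :
  (\big[@prod_add _ _ _ _ _ H/@prod_zero _ _ _ _ _ H]_(i < n) F i) j = \sum_(i < n) F i j.
Proof. by elim/big_rec2: _ => // i y1 y2 _ <-. Qed.

Lemma pnE (x : PT) : prod_norm x = Num.sqrt (\sum_j n2 (x j)).
Proof. by rewrite /prod_norm /prod_inner (big_morph re reD re0). Qed.

Lemma pn2 (x : PT) : prod_norm x ^+ 2 = \sum_j nm (x j) ^+ 2.
Proof.
rewrite pnE sqr_sqrtr; last by apply: sumr_ge0 => j _; exact: n2_ge0.
by apply: eq_bigr => j _; rewrite nm2.
Qed.

Lemma comp_le (x : PT) j : nm (x j) <= prod_norm x.
Proof.
rewrite pnE /nm ler_sqrt; last by apply: sumr_ge0 => k _; exact: n2_ge0.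
rewrite (bigD1 j) //= lerDl; apply: sumr_ge0 => k _; exact: n2_ge0.
Qed.

Lemma Aj_ne j : exists a, Aj j a.
Proof.
have [s Ss s0] := Sne j.
have ns : 0 < nm s.
  rewrite lt_def nm_ge0 andbT; apply/eqP => /nm_eq0; exact: s0.
exists (ofR (nm s)^-1 *: s); split.
  by apply: Scone => //; rewrite invr_ge0 ltW.
rewrite /unit_sphere /= nmE nmZ ger0_norm ?invr_ge0 ?ltW // mulVf //.
by rewrite gt_eqF.
Qed.

Lemma convj_atom j a : Aj j a -> convj j a.
Proof.
move=> Aa; exists 1%N, (fun=> 1), (fun=> a); split => //.
  by rewrite big_ord1.
by rewrite big_ord1 ofR1 scale1r.
Qed.

Lemma convj_le1 j z : convj j z -> nm z <= 1.
Proof.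
case=> n [w [a [w0 w1 aA ->]]].
apply: le_trans (nm_sum (V:=H j) n w a w0) _.
rewrite -w1 le_eqVlt; apply/orP; left; apply/eqP; apply: eq_bigr => i _.
by have [_ ha] := aA i; rewrite -nmE ha mulr1.
Qed.

Lemma Lconv z : pconv z -> exists c : 'I_J -> R,
  [/\ forall j, 0 <= c j <= 1, \sum_j c j ^+ 2 <= 1 &
      forall j, exists2 zeta, convj j zeta & z j = ofR (c j) *: zeta].
Proof.
case=> n [w [a [w0 w1 aA ->]]].
pose m i j := nm (a i j).
have m0 i j : 0 <= m i j by exact: nm_ge0.
have munit i : \sum_j m i j ^+ 2 = 1.
  by have [_ h] := aA i; rewrite -pn2 h expr1n.
pose c j := \sum_i w i * m i j.
have c0 j : 0 <= c j by apply: sumr_ge0 => i _; apply: mulr_ge0.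
have csum : \sum_j c j ^+ 2 <= 1.
  apply: le_trans (_ : \sum_j \sum_i w i * m i j ^+ 2 <= 1).
    by apply: ler_sum => j _; apply: jensen.
  rewrite exchange_big /= le_eqVlt; apply/orP; left; apply/eqP.
  by rewrite -w1; apply: eq_bigr => i _; rewrite -mulr_sumr munit mulr1.
exists c; split => // [j|j].
  rewrite c0 /=; have : c j ^+ 2 <= 1.
    apply: le_trans csum; rewrite (bigD1 j) //= lerDl.
    by apply: sumr_ge0 => k _; exact: sqr_ge0.
  by move=> h; have := c0 j; nra.
have [a0 Aa0] := Aj_ne j.
rewrite prod_eval /prod_scale.
have [cj0|cjn0] := eqVneq (c j) 0.
  exists a0; first exact: convj_atom.
  rewrite cj0 ofR0 scale0r big1 // => i _.
  have := @psumr_eq0P _ _ _ (fun i => w i * m i j) (fun k _ => mulr_ge0 (w0 k) (m0 k j)) cj0 i isT.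
  move=> /eqP; rewrite mulf_eq0 => /orP [/eqP ->|/eqP /nm_eq0 ->].
    by rewrite ofR0 scale0r.
  by rewrite scaler0.
have cpos : 0 < c j by rewrite lt_def cjn0 c0.
pose at_ i := if m i j == 0 then a0 else ofR (m i j)^-1 *: a i j.
exists (\sum_i ofR (w i * m i j / c j) *: at_ i).
  exists n, (fun i => w i * m i j / c j), at_; split.
  - by move=> i; apply: divr_ge0 => //; apply: mulr_ge0.
  - by rewrite -mulr_suml divff.
  - move=> i; rewrite /at_; case: eqP => // mn0.
    have [Sa na] := aA i; split; first by apply: Scone (Sa j); rewrite invr_ge0.
    rewrite /unit_sphere /= nmE nmZ ger0_norm ?invr_ge0 // mulVf //; exact/eqP.
  - by [].
rewrite scaler_sumr; apply: eq_bigr => i _.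
rewrite scaleRA /at_; case: eqP => [mz|mnz].
  have -> : a i j = 0 by apply: nm_eq0.
  by rewrite mz mulr0 mul0r mulr0 ofR0 !scale0r scaler0.
rewrite scaleRA; congr (_ *: _); congr ofR; field.
by rewrite cjn0 andbT; apply/eqP.
Qed.

Lemma closj j (yj : H j) (cs : nat -> R) (p : R) :
  0 <= p -> (forall n, 0 <= cs n) ->
  (forall n, exists zeta, convj j zeta /\
      nm (yj - ofR (cs n) *: zeta) < (n.+1%:R)^-1) ->
  (forall d, 0 < d -> forall N, exists2 n, (N <= n)%N & `|cs n - p| < d) ->
  exists2 b, clj j b & yj = ofR p *: b.
Proof.
move=> p0 cs0 hz clus.
have [zs hzs] := choice hz.
have tri n : nm yj <= (n.+1%:R)^-1 + cs n.
  have [cz hn] := hzs n.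
  rewrite -[yj](subrK (ofR (cs n) *: zs n)).
  apply: le_trans (nmD _ _) _; apply: lerD; first exact: ltW.
  rewrite nmZ ger0_norm // -[X in _ <= X]mulr1; apply: ler_wpM2l => //.
  exact: convj_le1.
have [a0 Aa0] := Aj_ne j.
have [pz|pnz] := eqVneq p 0.
  have ny : yj = 0.
    apply: nm_eq0; apply/eqP; rewrite eq_le nm_ge0 andbT.
    apply/ler_addgt0Pr => e e0; rewrite add0r.
    have e2 : 0 < e / 2 by rewrite divr_gt0.
    have [N hN] := arch _ e2.
    have [n Nn hn] := clus _ e2 N.
    apply: le_trans (tri n) _; rewrite [e](splitr e); apply: lerD; first exact/ltW/hN.
    by move: hn; rewrite pz subr0 ger0_norm // => /ltW.
  exists a0.
    move=> e e0; exists a0; first exact: convj_atom.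
    by rewrite subrr nmE nm0.
  by rewrite ny pz ofR0 scale0r.
have pp : 0 < p by rewrite lt_def pnz p0.
exists (ofR p^-1 *: yj); last by rewrite scaleRA mulfV // ofR1 scale1r.
move=> e e0.
have pe2 : 0 < p * e / 2 by rewrite divr_gt0 // mulr_gt0.
have [N hN] := arch _ pe2.
have [n Nn hn] := clus _ pe2 N.
have [cz hzn] := hzs n.
exists (zs n) => //.
have key : ofR p *: (ofR p^-1 *: yj + - zs n) =
    (yj - ofR (cs n) *: zs n) + ofR (cs n - p) *: zs n.
  rewrite scalerDr scaleRA mulfV // ofR1 scale1r ofRD ofRN scalerDl scaleNr.
  by rewrite addrA subrK scalerN.
rewrite nmE -(ltr_pM2l pp) -[X in X * nm _ < _](ger0_norm (ltW pp)) -nmZ key.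
apply: le_lt_trans (nmD _ _) _.
rewrite [p * e](splitr (p * e)); apply: ltr_leD; first exact: lt_trans hzn (hN n Nn).
rewrite nmZ; apply: le_trans (_ : `|cs n - p| * 1 <= _).
  by apply: ler_wpM2l => //; exact: convj_le1.
by rewrite mulr1 ltW.
Qed.

Lemma LB x t : PS x t -> exists c : 'I_J -> R,
  [/\ forall j, 0 <= c j, \sum_j c j ^+ 2 <= 1 & forall j, Sj j (x j) (t * c j)].
Proof.
case=> t0 [y cly <-].
have hz n : exists z, pconv z /\
    prod_norm (prod_add y (prod_opp z)) < (n.+1%:R)^-1.
  have hn : 0 < (n.+1%:R : R)^-1 by rewrite invr_gt0 ltr0Sn.
  by have [z ? ?] := cly _ hn; exists z.
have [zs hzs] := choice hz.
have hc n := Lconv (zs n) (proj1 (hzs n)).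

have [cs hcs] := choice hc.
pose v n : 'rV[R]_J := \row_j cs n j.
have := @rV_compact R J (fun=> `[0, 1]%classic) (fun=> @segment_compact R 0 1)
  (v @ \oo) _ _.
move=> hcomp.
have [p [pB pcl]] : [set w : 'rV[R]_J | forall i, `[0, 1]%classic (w ord0 i)]
    `&` cluster (v @ \oo) !=set0.
  apply: hcomp.
  have : \forall n \near \oo, forall i, `[0, 1]%classic (v n ord0 i).
    apply: nearW => n i /=; rewrite mxE in_itv /=.
    by have [h _ _] := hcs n; exact: h.
  by [].
have clus d : 0 < d -> forall N, exists2 n, (N <= n)%N &
    forall j, `|cs n j - p ord0 j| < d.
  move=> d0 N.
  have [w [[n Nn <-] hb]] := pcl [set v n | n in [set n | (N <= n)%N]] (ball p d)
    (filterS (fun n hn => ex_intro2 _ _ n hn erefl) (nbhs_infty_ge N))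
    (nbhsx_ballx p d d0).
  exists n => // j; case: hb => _ /(_ ord0 j).
  by rewrite /ball /= mxE distrC.
pose c j := p ord0 j.
have c0 j : 0 <= c j.
  by have := pB j; rewrite /= in_itv /= => /andP[].
exists c; split => //.
  apply/ler_addgt0Pr => e e0.
  pose d := Num.min 1 (e / (3 * J%:R + 1)).
  have d0 : 0 < d by rewrite lt_min ltr01 divr_gt0 // ltr_wpDl // mulr_ge0.
  have d1 : d <= 1 by rewrite ge_min lexx.
  have de : d <= e / (3 * J%:R + 1) by rewrite ge_min lexx orbT.
  have [n _ hn] := clus d d0 0%N.
  have [hb hsum _] := hcs n.
  apply: le_trans (_ : \sum_j (cs n j ^+ 2 + 3 * d) <= _).
    apply: ler_sum => j _.
    have := hn j; rewrite ltr_distlC => /andP[_ h].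
    have := hb j => /andP[h0 h1]; have := c0 j; rewrite /c => h2; nra.
  rewrite big_split /= sumr_const card_ord; apply: lerD => //.
  have hJ : 0 <= J%:R :> R by [].
  have : d * (3 * J%:R + 1) <= e.
    by rewrite -ler_pdivlMr // ltr_wpDl // mulr_ge0.
  rewrite -mulr_natr; nra.
move=> j.
have [b clb yb] : exists2 b, clj j b & y j = ofR (c j) *: b.
  apply: (@closj j (y j) (fun n => cs n j)) => //.
  - by move=> n; have [hb _ _] := hcs n; have /andP[] := hb j.
  - move=> n; have [_ _ hz'] := hcs n; have [zeta cz ez] := hz' j.
    exists zeta; split => //; rewrite -ez.
    apply: le_lt_trans (proj2 (hzs n)).
    exact: (comp_le (prod_add y (prod_opp (zs n))) j).
  - move=> d d0 N; have [n Nn hn] := clus d d0 N; exists n => //; exact: hn.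
split; first exact: mulr_ge0.
by exists b => //; rewrite /prod_scale yb scaleRA.
Qed.

Lemma split_l m n (a : 'I_m) : fintype.split (lshift n a) = inl a.
Proof. exact: (unsplitK (inl a)). Qed.
Lemma split_r m n (a : 'I_n) : fintype.split (rshift m a) = inr a.
Proof. exact: (unsplitK (inr a)). Qed.

Definition coneP W (v : PT) := exists n (om : 'I_n -> R) (u : 'I_n -> PT),
  [/\ forall l, 0 <= om l, forall l, PA (u l), \sum_l om l = W &
      forall j, v j = \sum_l ofR (om l) *: u l j].

Lemma coneP_pconv v : coneP 1 v -> pconv v.
Proof.
case=> n [om [u [om0 uA om1 ev]]]; exists n, om, u; split => //.
apply: functional_extensionality_dep => j; rewrite prod_eval ev.
by apply: eq_bigr.
Qed.

Lemma coneP0 : coneP 0 (@prod_zero _ _ _ _ _ H).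
Proof.
exists 0%N, (fun=> 0), (fun=> @prod_zero _ _ _ _ _ H); split; try by case.
  by rewrite big_ord0.
by move=> j; rewrite big_ord0.
Qed.

Lemma coneP_scale a W v : 0 <= a -> coneP W v ->
  coneP (a * W) (@prod_scale _ _ _ _ ofR _ H a v).
Proof.
move=> a0 [n [om [u [om0 uA om1 ev]]]].
exists n, (fun l => a * om l), u; split => //.
- by move=> l; apply: mulr_ge0.
- by rewrite -mulr_sumr om1.
- move=> j; rewrite /prod_scale ev scaler_sumr; apply: eq_bigr => l _.
  by rewrite scaleRA.
Qed.

Lemma coneP_add W1 W2 v1 v2 : coneP W1 v1 -> coneP W2 v2 ->
  coneP (W1 + W2) (@prod_add _ _ _ _ _ H v1 v2).
Proof.
move=> [n1 [om1 [u1 [om10 uA1 s1 ev1]]]] [n2 [om2 [u2 [om20 uA2 s2 ev2]]]].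
pose om (l : 'I_(n1 + n2)) := match fintype.split l with inl a => om1 a | inr b => om2 b end.
pose u (l : 'I_(n1 + n2)) := match fintype.split l with inl a => u1 a | inr b => u2 b end.
exists (n1 + n2)%N, om, u; split.
- by move=> l; rewrite /om; case: fintype.split.
- by move=> l; rewrite /u; case: fintype.split.
- rewrite big_split_ord /= -s1 -s2 /om; congr (_ + _); apply: eq_bigr => l _.
    by rewrite split_l.
  by rewrite split_r.
- move=> j; rewrite /prod_add ev1 ev2 big_split_ord /=; congr (_ + _);
    apply: eq_bigr => l _; rewrite /om /u.
    by rewrite split_l.
  by rewrite split_r.
Qed.

Lemma coneP_ext W v v' : (forall j, v j = v' j) -> coneP W v -> coneP W v'.
Proof.
move=> e [n [om [u [om0 uA om1 ev]]]]; exists n, om, u; split => // j.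
by rewrite -e.
Qed.

Lemma coneP_sum n (w : 'I_n -> R) (V : 'I_n -> PT) :
  (forall i, 0 <= w i) -> (forall i, coneP 1 (V i)) ->
  coneP (\sum_i w i) (fun j => \sum_i ofR (w i) *: V i j).
Proof.
move=> w0 hV.
apply: (@coneP_ext _ (\big[@prod_add _ _ _ _ _ H/@prod_zero _ _ _ _ _ H]_i
   @prod_scale _ _ _ _ ofR _ H (w i) (V i))).
  by move=> j; rewrite prod_eval.
elim/big_rec2: _ => [|i y1 y2 _ h]; first exact: coneP0.
apply: coneP_add _ h; have := @coneP_scale (w i) 1 (V i) (w0 i) (hV i); by rewrite mulr1.
Qed.

Lemma n2_0 j : n2 (0 : H j) = 0.
Proof. by rewrite /n2 ip0l re0. Qed.

Lemma stepS (s : 'I_J -> R) : (forall j, 0 <= s j) -> \sum_j s j ^+ 2 = 1 ->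
  forall k, (k <= J)%N -> forall q : PT,
  (forall j : 'I_J, (k <= j)%N -> Aj j (q j)) ->
  (forall j : 'I_J, (j < k)%N -> convj j (q j)) ->
  coneP 1 (fun j => ofR (s j) *: q j).
Proof.
move=> s0 s1; elim=> [_ q hA _|k IH hk q hA hC].
  exists 1%N, (fun=> 1), (fun=> fun j => ofR (s j) *: q j); split => //.
  - move=> _; split.
      by move=> j; apply: Scone => //; exact: (proj1 (hA j (leq0n _))).
    rewrite /unit_sphere /= pnE (eq_bigr (fun j => s j ^+ 2)) ?s1 ?sqrtr1 // => j _.
    rewrite -nm2 nmZ ger0_norm //.
    by have := proj2 (hA j (leq0n _)); rewrite /unit_sphere /= nmE => ->; rewrite mulr1.
  - by rewrite big_ord1.
  - by move=> j; rewrite big_ord1 ofR1 scale1r.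
pose kk := Ordinal hk.
have [n [w [a [w0 w1 aA eq]]]] := hC kk (ltnSn k).
pose qi i := @eqtype.dfwith _ _ q kk (a i).
have h1 i : coneP 1 (fun j => ofR (s j) *: qi i j).
  apply: IH (ltnW hk) _ _ _.
  - move=> j hj; rewrite /qi; case: (eqVneq kk j) => [<-|ne].
      by rewrite dfwith_in.
    rewrite dfwith_out //; apply: hA; rewrite ltn_neqAle hj andbT.
    move/eqP: ne => ne; apply/eqP => e; apply: ne; apply: val_inj; exact: e.
  - move=> j hj; rewrite /qi dfwith_out; first by apply: hC; exact: ltnW.
    by apply/eqP => e; move: hj; rewrite -e ltnn.
have := @coneP_sum n w (fun i j => ofR (s j) *: qi i j) w0 h1; rewrite w1; apply: coneP_ext => j.
case: (eqVneq kk j) => [<-|ne].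
  rewrite eq scaler_sumr; apply: eq_bigr => i _.
  by rewrite /qi dfwith_in !scaleRA mulrC.
under eq_bigr => i _ do rewrite /qi (dfwith_out _ _ ne).
by rewrite -scaler_suml -(big_morph ofR ofRD ofR0) w1 ofR1 scale1r.
Qed.

Lemma Ucomb (s : 'I_J -> R) (z : PT) : (forall j, 0 <= s j) ->
  \sum_j s j ^+ 2 = 1 -> (forall j, convj j (z j)) ->
  pconv (fun j => ofR (s j) *: z j).
Proof.
move=> s0 s1 hz; apply: coneP_pconv; apply: (@stepS s s0 s1 J (leqnn J)) => // j hj.
by move: hj; rewrite leqNgt ltn_ord.
Qed.

Hypothesis J0 : (0 < J)%N.

Lemma UB x (ts : 'I_J -> R) : (forall j, Sj j (x j) (ts j)) ->
  PS x (Num.sqrt (\sum_j ts j ^+ 2)).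
Proof.
move=> hS.
have t0 j : 0 <= ts j by case: (hS j).
have hb j : exists b, clj j b /\ ofR (ts j) *: b = x j.
  by case: (hS j) => _ [b ? ?]; exists b.
pose bs j := proj1_sig (cid (hb j)).
have bsP j : clj j (bs j) /\ ofR (ts j) *: bs j = x j := proj2_sig (cid (hb j)).
set T := Num.sqrt _.
have T0 : 0 <= T := sqrtr_ge0 _.
have sum0 : 0 <= \sum_j ts j ^+ 2 by apply: sumr_ge0 => j _; exact: sqr_ge0.
split => //.
have [Tz|Tnz] := eqVneq T 0.
  have hsum : \sum_j ts j ^+ 2 = 0.
    by move: Tz; rewrite /T => /eqP; rewrite sqrtr_eq0 => h; apply/eqP; rewrite eq_le h sum0.
  have ts0 j : ts j = 0.
    have := @psumr_eq0P _ _ _ (fun j => ts j ^+ 2) (fun j _ => sqr_ge0 (ts j)) hsum j isT.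
    by move/eqP; rewrite sqrf_eq0 => /eqP.
  pose j0 := Ordinal J0.
  have [a0 Aa0] := Aj_ne j0.
  pose u := @eqtype.dfwith _ _ (fun j => 0 : H j) j0 a0.
  have uA : PA u.
    split.
      move=> k; rewrite /u; case: (eqVneq j0 k) => [<-|ne].
        by rewrite dfwith_in; case: Aa0.
      rewrite dfwith_out //; have [s Ss _] := Sne k.
      by rewrite -(scale0r s) -ofR0; apply: Scone.
    rewrite /unit_sphere /= pnE (bigD1 j0) //= big1 ?addr0.
      by rewrite /u dfwith_in -nm2; case: Aa0 => _; rewrite /unit_sphere /= nmE => ->; rewrite expr1n sqrtr1.
    by move=> k hk; rewrite /u dfwith_out ?n2_0 // eq_sym.
  exists u.
    move=> e e0; exists u.
      apply: coneP_pconv; exists 1%N, (fun=> 1), (fun=> u); split => //.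
        by rewrite big_ord1.
      by move=> j; rewrite big_ord1 ofR1 scale1r.
    rewrite pnE big1 ?sqrtr0 // => j _.
    by rewrite /prod_add /prod_opp subrr n2_0.
  apply: functional_extensionality_dep => j.
  by rewrite /prod_scale Tz ofR0 scale0r -(proj2 (bsP j)) ts0 ofR0 scale0r.
have Tp : 0 < T by rewrite lt_def Tnz T0.
have hs1 : \sum_j (ts j / T) ^+ 2 = 1.
  under eq_bigr do rewrite expr_div_n.
  by rewrite -mulr_suml -(sqr_sqrtr sum0) -/T mulfV // sqrf_eq0.
have s0 j : 0 <= ts j / T by apply: divr_ge0.
pose y j := ofR (ts j / T) *: bs j.
exists y; last first.
  apply: functional_extensionality_dep => j.
  by rewrite /prod_scale /y scaleRA mulrC divfK // (proj2 (bsP j)).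
move=> e e0.
have e2 : 0 < e / 2 by rewrite divr_gt0.
have hz j : exists z, convj j z /\ nm (bs j + - z) < e / 2.
  by case: ((proj1 (bsP j)) _ e2) => z ? ?; exists z.
pose zs j := proj1_sig (cid (hz j)).
have zsP j : convj j (zs j) /\ nm (bs j + - zs j) < e / 2 := proj2_sig (cid (hz j)).
exists (fun j => ofR (ts j / T) *: zs j).
  by apply: Ucomb => // j; case: (zsP j).
apply: (@le_lt_trans _ _ (e / 2)); last by lra.
rewrite pnE -(ger0_norm (ltW e2)) -sqrtr_sqr ler_sqrt ?sqr_ge0 //.
apply: le_trans (_ : \sum_j (ts j / T) ^+ 2 * (e / 2) ^+ 2 <= _).
  apply: ler_sum => j _.
  rewrite /prod_add /prod_opp /y -scalerBr n2Z; apply: ler_wpM2l; first exact: sqr_ge0.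
  rewrite -nm2 ler_pXn2r // ?nnegrE ?nm_ge0 ?(ltW e2) //.
  exact: ltW (proj2 (zsP j)).
by rewrite -mulr_suml hs1 mul1r.
Qed.

Lemma gauge_fin (S : set R) : (forall t, S t -> 0 <= t) -> forall t0, S t0 ->
  let g := ereal_inf [set t%:E | t in S] in
  [/\ g = (fine g)%:E, 0 <= fine g, forall t, S t -> fine g <= t &
      forall u, fine g < u -> exists2 t, S t & t < u].
Proof.
move=> hS t0 St0 g.
have g0 : (0 <= g)%E by apply/ereal_infP => _ [t St <-]; rewrite lee_fin hS.
have gt0 : (g <= t0%:E)%E by apply: ereal_inf_lbound; exists t0.
have gfin : g \is a fin_num by rewrite ge0_fin_numE // (le_lt_trans gt0) ?ltry.
have ge : g = (fine g)%:E by rewrite fineK.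
split => //.
- by rewrite -lee_fin -ge.
- by move=> t St; rewrite -lee_fin -ge; apply: ereal_inf_lbound; exists t.
- move=> u hu; have : (g < u%:E)%E by rewrite ge lte_fin.
  by case/ereal_inf_lt => _ [t St <-]; rewrite lte_fin => tu; exists t.
Qed.

Lemma main_gen x :
  (prod_gauge ofR (prod_set Sigma) x * prod_gauge ofR (prod_set Sigma) x)%E
  = (\sum_(j < J) (hgauge ofR (Sigma j) (x j) * hgauge ofR (Sigma j) (x j)))%E.
Proof.
rewrite prod_gaugeE; under eq_bigr do rewrite hgaugeE.
have Sj0 j v t : Sj j v t -> 0 <= t by case.
have PS0 t : PS x t -> 0 <= t by case.
have [allne|] := pselect (forall j, exists t, Sj j (x j) t); last first.
  move=> /existsNP [j0 hj0].
  have e0 : Sj j0 (x j0) = set0.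
    by apply/seteqP; split => // t St; apply: hj0; exists t.
  have ePS : PS x = set0.
    apply/seteqP; split => // t /(@LB x t) [c [_ _ hc]]; apply: hj0; exists (t * c j0); exact: hc.
  rewrite ePS image_set0 ereal_inf0 mulyy (bigD1 j0) //= e0 image_set0 ereal_inf0 mulyy addye //.
  rewrite gt_eqF //; apply: (lt_le_trans ltNy0); apply: sume_ge0 => j _.
  apply: mule_ge0; apply/ereal_infP => _ [t St <-]; rewrite lee_fin; exact: Sj0 St.
pose ts0 j := proj1_sig (cid (allne j)).
have ts0P j : Sj j (x j) (ts0 j) := proj2_sig (cid (allne j)).
pose r j := fine (ereal_inf [set t%:E | t in Sj j (x j)]).
have hr j := @gauge_fin (Sj j (x j)) (@Sj0 j (x j)) _ (ts0P j).
have PSt := @UB x ts0 ts0P.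
have [hG G0 Glb Gapx] := @gauge_fin (PS x) PS0 _ PSt.
set G := ereal_inf _ in hG G0 Glb Gapx *.
set rho := fine G in hG G0 Glb Gapx *.
have r0 j : 0 <= r j by case: (hr j).
have lower : \sum_j r j ^+ 2 <= rho ^+ 2.
  have [|t PSt' trho] := Gapx (rho + 1); first by rewrite ltrDl.
  rewrite -(sqr_sqrtr (sumr_ge0 _ (fun j _ => sqr_ge0 (r j)))).
  rewrite ler_pXn2r ?nnegrE ?sqrtr_ge0 //.
  rewrite leNgt; apply/negP => hlt.
  have [t' PSt'' t'lt] := Gapx _ hlt.
  have [c [c0 csum hc]] := @LB x t' PSt''.
  have : \sum_j r j ^+ 2 <= t' ^+ 2.
    apply: le_trans (_ : \sum_j (t' * c j) ^+ 2 <= _).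
      apply: ler_sum => j _; rewrite ler_pXn2r ?nnegrE ?r0 ?mulr_ge0 ?(PS0 _ PSt'') //.
      by case: (hr j) => _ _ h _; exact: h.
    under eq_bigr do rewrite exprMn.
    by rewrite -mulr_sumr ler_piMr ?sqr_ge0.
  move=> h; have : Num.sqrt (\sum_j r j ^+ 2) <= t'.
    by rewrite -(ger0_norm (PS0 _ PSt'')) -sqrtr_sqr ler_sqrt ?sqr_ge0.
  by rewrite leNgt t'lt.
have upper : rho ^+ 2 <= \sum_j r j ^+ 2.
  apply/ler_addgt0Pr => e e0.
  have eJ : 0 < e / J%:R by rewrite divr_gt0 // ltr0n.
  have ht j : exists t, Sj j (x j) t /\ t < Num.sqrt (r j ^+ 2 + e / J%:R).
    have : r j < Num.sqrt (r j ^+ 2 + e / J%:R).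
      rewrite -[X in X < _](ger0_norm (r0 j)) -sqrtr_sqr ltr_sqrt ?ltrDl //.
      by rewrite ltr_wpDl ?sqr_ge0.
    by case: (hr j) => _ _ _ h /h [t St tl]; exists t.
  pose ts j := proj1_sig (cid (ht j)).
  have tsP j : Sj j (x j) (ts j) /\ ts j < Num.sqrt (r j ^+ 2 + e / J%:R) :=
    proj2_sig (cid (ht j)).
  have PSts := @UB x ts (fun j => proj1 (tsP j)).
  have := Glb _ PSts.
  rewrite -(ler_pXn2r (n:=2)) ?nnegrE ?sqrtr_ge0 // sqr_sqrtr; last first.
    by apply: sumr_ge0 => j _; exact: sqr_ge0.
  move=> h; apply: le_trans h _.
  apply: le_trans (_ : \sum_j (r j ^+ 2 + e / J%:R) <= _).
    apply: ler_sum => j _; have [Stj tl] := tsP j.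
    rewrite -(sqr_sqrtr (_ : 0 <= r j ^+ 2 + e / J%:R)); last by rewrite addr_ge0 ?sqr_ge0 ?ltW.
    rewrite ler_pXn2r ?nnegrE ?sqrtr_ge0 ?(Sj0 _ _ _ Stj) //; exact: ltW.
  rewrite big_split /= sumr_const card_ord.
  have -> : e / J%:R *+ J = e.
    by rewrite -[_ *+ J]mulr_natr divfK // pnatr_eq0 -lt0n.
  by [].
have eq : rho ^+ 2 = \sum_j r j ^+ 2 by apply/eqP; rewrite eq_le upper lower.
rewrite hG -EFinM -expr2 eq -sumEFin; apply: eq_bigr => j _.
by case: (hr j) => h _ _ _; rewrite h -EFinM expr2.
Qed.

End Prod.

End Gen.

Section Cx. Variable R : realType.
Local Notation C := (R[i]).
Lemma t1 : {morph (@conjc R) : a b / a + b}.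
Proof. exact: rmorphD. Qed.
Lemma t2 : {morph (@conjc R) : a b / a * b}.
Proof. exact: rmorphM. Qed.
Lemma t3 (t : R) (a : C) : complex.Re (real_complex R t * a) = t * complex.Re a.
Proof. by case: a => a1 a2 /=; rewrite mul0r subr0. Qed.
Lemma t4 (t : R) : conjc (real_complex R t) = real_complex R t.
Proof. by rewrite /= oppr0. Qed.
Lemma t5 : {morph (@complex.Re R) : a b / a + b}.
Proof. by move=> [a1 a2] [b1 b2]. Qed.
Lemma t6 a : complex.Re (@conjc R a) = complex.Re a.
Proof. by case: a. Qed.
Lemma t7 : {morph (real_complex R) : a b / a + b}.
Proof. by move=> a b; rewrite /= ; congr (Complex _ _); rewrite addr0. Qed.
Lemma t8 : {morph (real_complex R) : a b / a * b}.
Proof. by move=> a b /=; congr (Complex _ _); rewrite ?mulr0 ?mul0r ?subr0 ?addr0. Qed.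
Lemma t9 : real_complex R 1 = 1.
Proof. by []. Qed.
End Cx.


Theorem lemma4 (R : realType) :
  (* real Hilbert spaces *)
  (forall (J : nat) (H : 'I_J -> hilbertSpace (K := R) id id)
     (Sigma : forall j, set (H j)),
     (0 < J)%N ->
     (forall j, hcone id (Sigma j)) ->
     (forall j, exists2 s, Sigma j s & s <> 0) ->
     forall x : forall j, H j,
       (prod_gauge id (prod_set Sigma) x * prod_gauge id (prod_set Sigma) x)%E
       = (\sum_(j < J) (hgauge id (Sigma j) (x j) * hgauge id (Sigma j) (x j)))%E)
  /\
  (* complex Hilbert spaces *)
  (forall (J : nat) (H : 'I_J -> hilbertSpace (@conjc R) (@complex.Re R))
     (Sigma : forall j, set (H j)),
     (0 < J)%N ->
     (forall j, hcone (fun t : R => real_complex R t) (Sigma j)) ->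
     (forall j, exists2 s, Sigma j s & s <> 0) ->
     forall x : forall j, H j,
       (prod_gauge (fun t : R => real_complex R t) (prod_set Sigma) x
          * prod_gauge (fun t : R => real_complex R t) (prod_set Sigma) x)%E
       = (\sum_(j < J) (hgauge (fun t : R => real_complex R t) (Sigma j) (x j)
                        * hgauge (fun t : R => real_complex R t) (Sigma j) (x j)))%E).
Proof.
split.
  move=> J H Sigma J0 Hc Hne x.
  by apply: (@main_gen R R id id id) => //.
move=> J H Sigma J0 Hc Hne x.
exact: (@main_gen R R[i] (@conjc R) (@complex.Re R) (fun t => real_complex R t)
  (@t1 R) (@t2 R) (@t4 R) (@t5 R) (@t3 R) (@t6 R) (@t7 R) (@t8 R) (@t9 R)
  J H Sigma Hc Hne J0 x).
Qed.
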